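(* Under Strategy 1 (described in the context), let $U_s(\omega)$ be the number of uncles created during the attack cycle $\omega$ that are referred by nephew blocks mined by the attacker, in $\omega$ or in a later cycle. Then $$\mathbb{E}[U_s]=q+\frac{q^3\gamma}{p-q}-\frac{pq^2}{p-q}\Bigl(\frac qp\Bigr)^{n_1-1}\gamma-q^{n_1+1}(1-\gamma)-\left[p^2q+\bigl(p+(1-\gamma)p^2q\bigr)\left(\frac{q^2}{p}\bigl(1-q^{n_1-1}\bigr)\gamma+(1-\gamma)pq^2\frac{1-(pq)^{n_1-1}}{1-pq}\right)\right].$$
   Context: Honest hashrate $p$, attacker hashrate $q$, $p+q=1$, $0<q<p$; $\gamma\in[0,1]$ is the fraction of honest hashrate mining on the attacker's block during a public competition between equal-height blocks. Attack cycles are i.i.d. words in S (attacker block) and H (honest block): H, SHS, SHH, or SSwH with $w$ a Dyck word; $\mathbb{P}[H]=p$, $\mathbb{P}[SHS]=pq^2$, $\mathbb{P}[SHH]=p^2q$, $\mathbb{P}[SSwH]=q^2p(pq)^{|w|}$ ($|w|$ half the length of $w$). In SHH the second honest block is built on the attacker's block with probability $\gamma$ and on the first honest block with probability $1-\gamma$. Ethereum rules: an uncle is a non-official block whose parent is official; a nephew (official block) may refer an uncle at distance (height difference) at most $n_1$ ($n_1\ge2$ an integer); every referred uncle is referred by exactly one nephew, mined either by the attacker or by the honest miners. Strategy 1: the attacker withholds his blocks, and each time the honest miners publish a block he publishes the part of his secret fork of the same height as the public honest chain (a fraction $\gamma$ of honest hashrate then mines on the attacker's branch); the attacker's fork wins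 in cycles starting with SS; all miners refer all possible uncles. *)

(* Defs.v *)
From Stdlib Require Import Reals List Arith Bool.
Import ListNotations.
Open Scope R_scope.

(** Randomness: an i.i.d. sequence of mining events.  Each new block is
    mined by the attacker with probability q ([evS]) or by the honest
    miners with probability p ([evH b]); the boolean [b] records on which
    branch the honest block is built when there is a public competition:
    [b = true] (probability gamma) = on the attacker's published branch,
    [b = false] (probability 1-gamma) = on the honest branch.  When there
    is no competition the coin is simply ignored. *)

Inductive ev : Type := evS | evH (b : bool).

Definition ev_weight (p gamma : R) (q : R) (e : ev) : R :=
  match e with
  | evS => q
  | evH true => p * gamma
  | evH false => p * (1 - gamma)
  end.

Definition seq_prob (p q gamma : R) (s : list ev) : R :=
  fold_right (fun e acc => ev_weight p gamma q e * acc) 1 s.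

Fixpoint all_seqs (n : nat) : list (list ev) :=
  match n with
  | O => [nil]
  | S n' => flat_map (fun s => [evS :: s; evH true :: s; evH false :: s])
                     (all_seqs n')
  end.

(** * Attack cycles: H, SHS, SHH, SSwH (w a Dyck word). *)

(** In a cycle starting with SS, [d] = (attacker blocks) - (honest blocks);
    the cycle ends with the honest block bringing [d] from 2 to 1.
    Returns the number of events consumed. *)
Fixpoint ss_end (d : nat) (l : list ev) : option nat :=
  match l with
  | nil => None
  | evS :: l' => option_map S (ss_end (S d) l')
  | evH _ :: l' => if Nat.eqb d 2 then Some 1%nat else option_map S (ss_end (pred d) l')
  end.

Definition cycle_len (l : list ev) : option nat :=
  match l with
  | evH _ :: _ => Some 1%nat
  | evS :: evH _ :: _ :: _ => Some 3%nat
  | evS :: evS :: l' => option_map (plus 2) (ss_end 2 l')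
  | _ => None
  end.

Fixpoint split_cycles (fuel : nat) (l : list ev) : list (list ev) :=
  match fuel with
  | O => nil
  | S f => match cycle_len l with
           | Some k => firstn k l :: split_cycles f (skipn k l)
           | None => nil
           end
  end.

Record block : Type := Block {
  b_att : bool;
  b_height : nat;
  b_official : bool;
  b_parent_official : bool }.

Definition is_uncle (b : block) : bool :=
  negb (b_official b) && b_parent_official b.

(** Blocks of a cycle starting with SS (attacker's fork wins): the j-th
    attacker block is official at height h0+j; the i-th honest block is at
    height h0+i (public chain), is not official, and its parent is official
    iff it is the first honest block (built on the fork point) or it was
    built on the attacker's published branch. *)
Fixpoint ss_blocks (h0 a i : nat) (l : list ev) : list block :=
  match l with
  | nil => nil
  | evS :: l' => Block true (h0 + S a) true true :: ss_blocks h0 (S a) i l'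
  | evH b :: l' =>
      Block false (h0 + S i) false (Nat.eqb i 0 || b) :: ss_blocks h0 a (S i) l'
  end.

Definition cycle_blocks (h0 : nat) (c : list ev) : list block :=
  match c with
  | [evH _] => [Block false (S h0) true true]
  | [evS; evH _; evS] =>
      [Block true (S h0) true true; Block false (S h0) false true;
       Block true (S (S h0)) true true]
  | [evS; evH _; evH true] =>
      [Block true (S h0) true true; Block false (S h0) false true;
       Block false (S (S h0)) true true]
  | [evS; evH _; evH false] =>
      [Block true (S h0) false true; Block false (S h0) true true;
       Block false (S (S h0)) true true]
  | evS :: evS :: _ => ss_blocks h0 0 0 c
  | _ => nil
  end.

Definition n_official (bs : list block) : nat :=
  length (filter b_official bs).

Fixpoint cycles_blocks (h0 : nat) (cs : list (list ev)) : list block :=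
  match cs with
  | nil => nil
  | c :: cs' => let bs := cycle_blocks h0 c in
                bs ++ cycles_blocks (h0 + n_official bs) cs'
  end.

(** Ethereum rule: the uncle [u] is referred by the first official block
    mined after it at distance (height difference) between 1 and n1. *)
Definition nephew (n1 : nat) (u : block) (later : list block) : option block :=
  find (fun b => b_official b && Nat.ltb (b_height u) (b_height b)
                 && Nat.leb (b_height b) (b_height u + n1)) later.

Fixpoint count_att_refs (n1 : nat) (first later : list block) : nat :=
  match first with
  | nil => O
  | u :: f' =>
      ((if is_uncle u then
          match nephew n1 u (f' ++ later) with
          | Some b => if b_att b then 1 else 0
          | None => 0
          end
        else 0) + count_att_refs n1 f' later)%nat
  end.

(** U_s of the first attack cycle, as determined by the complete cycles of
    the finite event prefix [s] (0 if the first cycle is not complete).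
    This is nondecreasing in the prefix and converges to U_s. *)
Definition Us_prefix (n1 : nat) (s : list ev) : nat :=
  match split_cycles (length s) s with
  | nil => O
  | c :: cs => let bs := cycle_blocks 0 c in
               count_att_refs n1 bs (cycles_blocks (n_official bs) cs)
  end.

Definition ExpUs_N (p q gamma : R) (n1 N : nat) : R :=
  fold_right Rplus 0
    (map (fun s => seq_prob p q gamma s * INR (Us_prefix n1 s)) (all_seqs N)).

(* Main.v *)
Require Import Defs.
From Stdlib Require Import Reals.
From Stdlib Require Import List Arith Bool Lia Lra.
Import ListNotations.
Open Scope R_scope.

Local Open Scope nat_scope.

Inductive st : Type :=
 | St0 | S1 | SH | W1 (k : nat) (f : bool) (a b : nat)
 | Nx (b : nat) | NS (b : nat) | NSH (b : nat) | W2 (k b : nat) | Done.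

Definition rew (x : st) (e : ev) : nat :=
  match x, e with
  | SH, evS => 1
  | W1 0 _ a _, evH _ => a
  | NSH b, evS => b
  | NSH b, evH true => b
  | W2 0 b, evH _ => b
  | _, _ => 0
  end%nat.

Definition uval (n1 k : nat) (f c : bool) : nat :=
  if (f || c) && Nat.leb (S (S k)) n1 then 1 else 0.

Definition nxt (n1 : nat) (x : st) (e : ev) : st :=
  match x, e with
  | St0, evS => S1
  | St0, evH _ => Done
  | S1, evS => W1 0 true 0 0
  | S1, evH _ => SH
  | SH, _ => Done
  | W1 k f a b, evS => W1 (S k) f (a + b) 0
  | W1 0 f a b, evH c => Nx (b + uval n1 0 f c)
  | W1 (S k) f a b, evH c => W1 k false a (b + uval n1 (S k) f c)
  | Nx b, evS => NS b
  | Nx _, evH _ => Done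
  | NS b, evS => W2 0 b
  | NS b, evH _ => NSH b
  | NSH _, _ => Done
  | W2 k b, evS => W2 (S k) b
  | W2 0 _, evH _ => Done
  | W2 (S k) b, evH _ => W2 k b
  | Done, _ => Done
  end%nat.

Fixpoint G (n1 : nat) (x : st) (s : list ev) : nat :=
  match s with
  | nil => 0
  | e :: s' => rew x e + G n1 (nxt n1 x e) s'
  end%nat.

Lemma G_Done n1 s : G n1 Done s = 0%nat.
Proof. induction s; simpl; auto. Qed.

Lemma G_W2 n1 s : forall k b,
  G n1 (W2 k b) s = match ss_end (S (S k)) s with Some _ => b | None => 0%nat end.
Proof.
  induction s as [|e s IH]; intros k b; simpl; auto.
  destruct e.
  - destruct k; simpl; rewrite IH; destruct (ss_end _ s); simpl; auto.
  - destruct k; simpl.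
    + rewrite G_Done. lia.
    + rewrite IH. destruct (ss_end (S (S k)) s); simpl; auto.
Qed.

Definition fo_att (L : list block) : nat :=
  match find b_official L with
  | Some bl => if b_att bl then 1 else 0
  | None => 0
  end%nat.

Lemma G_Nx n1 r fuel A b : (length r <= fuel)%nat ->
  G n1 (Nx b) r = (b * fo_att (cycles_blocks A (split_cycles fuel r)))%nat.
Proof.
  intros Hf.
  destruct r as [|e1 r]; [simpl; destruct fuel; simpl; unfold fo_att; simpl; lia|].
  destruct fuel as [|fuel]; [simpl in Hf; lia|].
  destruct e1 as [|c1].
  - destruct r as [|e2 r]; [simpl; unfold fo_att; simpl; lia|].
    destruct e2 as [|c2].
    + simpl. rewrite G_W2. destruct (ss_end 2 r); simpl; unfold fo_att; simpl; lia.
    + destruct r as [|e3 r]; [simpl; unfold fo_att; simpl; lia|].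
      destruct e3 as [|[|]]; simpl; rewrite ?G_Done; unfold fo_att; simpl; lia.
  - simpl. rewrite G_Done. unfold fo_att; simpl. lia.
Qed.

Lemma rew_W1_S k f a b : rew (W1 k f a b) evS = 0%nat.
Proof. destruct k; reflexivity. Qed.
Lemma nxt_W1_S n1 k f a b : nxt n1 (W1 k f a b) evS = W1 (S k) f (a + b) 0.
Proof. destruct k; reflexivity. Qed.

Lemma G_W1_none n1 l : forall k f a b, ss_end (S (S k)) l = None -> G n1 (W1 k f a b) l = 0%nat.
Proof.
  induction l as [|e l IH]; intros k f a b H; [reflexivity|].
  destruct e as [|c].
  - cbn [G]. rewrite rew_W1_S, nxt_W1_S. simpl in H.
    destruct (ss_end (S (S (S k))) l) eqn:E; [discriminate|]. rewrite IH; auto.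
  - destruct k as [|k]; [discriminate|]. simpl in H.
    destruct (ss_end (S (S k)) l) eqn:E; [discriminate|]. simpl. rewrite IH; auto.
Qed.

Fixpoint cntS (l : list ev) : nat :=
  match l with nil => 0 | evS :: l => S (cntS l) | _ :: l => cntS l end.
Definition hasS (l : list ev) : bool := negb (Nat.eqb (cntS l) 0).

Definition predh (n1 h : nat) (b : block) : bool :=
  b_official b && Nat.ltb h (b_height b) && Nat.leb (b_height b) (h + n1).

Lemma find_none {A} (f : A -> bool) L : (forall x, In x L -> f x = false) -> find f L = None.
Proof. induction L as [|x L IH]; simpl; intros H; auto. rewrite H by auto. apply IH; auto. Qed.

Lemma find_app {A} (f : A -> bool) X Y :
  find f (X ++ Y) = match find f X with Some b => Some b | None => find f Y end.
Proof. induction X as [|x X IH]; simpl; auto. destruct (f x); auto. Qed.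

Lemma find_none_noff X : find b_official X = None -> n_official X = 0%nat.
Proof.
  induction X as [|x X IH]; simpl; auto. unfold n_official; simpl.
  destruct (b_official x); [discriminate|]. apply IH.
Qed.

Lemma n_off_ss l : forall h0 a i, n_official (ss_blocks h0 a i l) = cntS l.
Proof.
  induction l as [|[|c] l IH]; intros; simpl; auto; unfold n_official in *; simpl; auto.
Qed.

Lemma ss_heights l : forall h0 a i x, In x (ss_blocks h0 a i l) -> (S h0 <= b_height x)%nat.
Proof.
  induction l as [|[|c] l IH]; intros h0 a i x H; simpl in H; [contradiction| |];
  destruct H as [<-|H]; simpl; try lia; eapply IH; eauto.
Qed.

Ltac cyc_cases c :=
  destruct c as [|[|?c1] c];
  [| destruct c as [|[|?c2] c]; [| |destruct c as [|[|[|]] [|?e4 c]]] | destruct c as [|?e2 c]].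

Lemma cyc_heights h0 c x : In x (cycle_blocks h0 c) -> (S h0 <= b_height x)%nat.
Proof.
  intros H. cyc_cases c; simpl in H;
  repeat (destruct H as [<-|H]; [simpl; lia|]); try contradiction;
  eapply ss_heights; eauto.
Qed.

Lemma cycs_heights cs : forall h0 x, In x (cycles_blocks h0 cs) -> (S h0 <= b_height x)%nat.
Proof.
  induction cs as [|c cs IH]; intros h0 x H; simpl in H; [contradiction|].
  apply in_app_or in H. destruct H as [H|H].
  - eapply cyc_heights; eauto.
  - apply IH in H. lia.
Qed.

Lemma ss_first_off l : forall h0 i bl, find b_official (ss_blocks h0 0 i l) = Some bl -> b_height bl = S h0.
Proof.
  induction l as [|[|c] l IH]; intros h0 i bl H; simpl in H; [discriminate| |].
  - inversion H; subst; simpl; lia.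
  - eapply IH; eauto.
Qed.

Lemma cyc_first_off h0 c bl : find b_official (cycle_blocks h0 c) = Some bl -> b_height bl = S h0.
Proof.
  intros H. cyc_cases c; simpl in H;
  try discriminate; try (inversion H; subst; simpl; lia);
  try (eapply ss_first_off; eauto).
Qed.

Lemma cycs_first_off cs : forall h0 bl, find b_official (cycles_blocks h0 cs) = Some bl -> b_height bl = S h0.
Proof.
  induction cs as [|c cs IH]; intros h0 bl H; simpl in H; [discriminate|].
  rewrite find_app in H. destruct (find b_official (cycle_blocks h0 c)) eqn:E.
  - inversion H; subst. eapply cyc_first_off; eauto.
  - apply find_none_noff in E. rewrite E, Nat.add_0_r in H. eauto.
Qed.

Lemma FL n1 L h Af :
  (forall x, In x L -> (S Af <= b_height x)%nat) ->
  (forall bl, find b_official L = Some bl -> b_height bl = S Af) ->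
  (h < S Af)%nat ->
  find (predh n1 h) L = if Nat.leb (S Af) (h + n1) then find b_official L else None.
Proof.
  induction L as [|x L IH]; intros Hh Hf Hlt;
    [cbn [find]; destruct (Nat.leb (S Af) (h + n1)); reflexivity|].
  cbn [find]. destruct (b_official x) eqn:Ox.
  - assert (Hx : b_height x = S Af) by (apply Hf; simpl; rewrite Ox; auto).
    unfold predh at 1. rewrite Ox, Hx.
    replace (h <? S Af) with true by (symmetry; apply Nat.ltb_lt; lia). cbn [andb].
    destruct (Nat.leb (S Af) (h + n1)) eqn:E; [reflexivity|].
    apply find_none. intros y Hy. unfold predh.
    assert (S Af <= b_height y)%nat by (apply Hh; simpl; auto).
    apply Nat.leb_gt in E.
    destruct (Nat.leb_spec (b_height y) (h + n1)); [lia|].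
    rewrite !andb_false_r. auto.
  - unfold predh at 1. rewrite Ox. cbn [andb]. apply IH; auto.
    + intros y Hy. apply Hh. simpl; auto.
    + intros bl Hb. apply Hf. simpl. rewrite Ox. auto.
Qed.

Lemma NLgen n1 l : forall a i h L,
  (h < S a)%nat ->
  (forall x, In x L -> (S (a + cntS l) <= b_height x)%nat) ->
  (forall bl, find b_official L = Some bl -> b_height bl = S (a + cntS l)) ->
  find (predh n1 h) (ss_blocks 0 a i l ++ L) =
  if hasS l then (if Nat.leb (S a) (h + n1) then Some (Block true (S a) true true) else None)
  else (if Nat.leb (S a) (h + n1) then find b_official L else None).
Proof.
  induction l as [|[|c] l IH]; intros a i h L Hlt Hh Hf.
  - simpl. rewrite Nat.add_0_r in *. apply FL; auto.
  - cbn [ss_blocks app find]. unfold predh at 1. cbn [b_official b_height b_att].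
    change (0 + S a)%nat with (S a).
    replace (h <? S a) with true by (symmetry; apply Nat.ltb_lt; lia).
    change (hasS (evS :: l)) with true. cbn [andb].
    destruct (Nat.leb (S a) (h + n1)) eqn:E; [reflexivity|].
    rewrite IH; try lia.
    + apply Nat.leb_gt in E.
      destruct (Nat.leb_spec (S (S a)) (h + n1)); [lia|].
      destruct (hasS l); auto.
    + intros x Hx. specialize (Hh x Hx). simpl in Hh. lia.
    + intros bl Hb. rewrite (Hf bl Hb). simpl. lia.
  - cbn [ss_blocks app find]. unfold predh at 1. cbn [b_official]. simpl.
    apply IH; auto.
Qed.

Lemma nephew_predh n1 u L : nephew n1 u L = find (predh n1 (b_height u)) L.
Proof. reflexivity. Qed.

Lemma W1main n1 l0 : forall k f a b i m Af L,
  ss_end (S (S k)) l0 = Some m ->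
  f = Nat.eqb i 0 ->
  Af = (i + S (S k) + cntS (firstn m l0))%nat ->
  (forall x, In x L -> (S Af <= b_height x)%nat) ->
  (forall bl, find b_official L = Some bl -> b_height bl = S Af) ->
  (forall c, G n1 (Nx c) (skipn m l0) = (c * fo_att L)%nat) ->
  G n1 (W1 k f a b) l0 =
    (a + b * (if hasS (firstn m l0) then 1 else fo_att L)
     + count_att_refs n1 (ss_blocks 0 (i + S (S k)) i (firstn m l0)) L)%nat.
Proof.
  induction l0 as [|e l0 IH]; intros k f a b i m Af L Hend Hf HAf Hh Hfo HG;
    [discriminate|].
  destruct e as [|c].
  - simpl in Hend. destruct (ss_end (S (S (S k))) l0) as [n|] eqn:E; [|discriminate].
    simpl in Hend. inversion Hend; subst m. clear Hend.
    cbn [G]. rewrite rew_W1_S, nxt_W1_S.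
    cbn [firstn skipn] in *.
    rewrite (IH (S k) f (a + b) 0 i n Af L E Hf) by (auto; simpl in HAf |- *; lia).
    cbn [ss_blocks count_att_refs is_uncle b_official b_parent_official negb andb].
    change (hasS (evS :: firstn n l0)) with true.
    replace (S (i + S (S k)))%nat with (i + S (S (S k)))%nat by lia.
    change (if true then 1 else fo_att L) with 1.
    lia.
  - destruct k as [|k'].
    + simpl in Hend. inversion Hend; subst m. clear Hend.
      cbn [firstn skipn] in *.
      cbn [G rew nxt]. rewrite HG.
      cbn [ss_blocks count_att_refs is_uncle b_official b_parent_official negb andb].
      rewrite nephew_predh. cbn [b_height].
      change (0 + S i) with (S i).
      change ([] ++ L) with (ss_blocks 0 (i + 2) (S i) [] ++ L).
      rewrite NLgen; try lia;
        [| intros x Hx; specialize (Hh x Hx); simpl in HAf |- *; lia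
         | intros bl Hb; rewrite (Hfo bl Hb); simpl in HAf |- *; lia].
      change (hasS []) with false. change (hasS [evH c]) with false.
      subst f. unfold uval, fo_att.
      destruct (Nat.leb_spec (S (i + 2)) (S i + n1));
      destruct (Nat.leb_spec 2 n1); try lia;
      destruct (i =? 0); destruct c; simpl;
      destruct (find b_official L) as [bl|]; try destruct (b_att bl); lia.
    + simpl in Hend. destruct (ss_end (S (S k')) l0) as [n|] eqn:E; [|discriminate].
      simpl in Hend. inversion Hend; subst m. clear Hend.
      cbn [firstn skipn] in *.
      cbn [G rew nxt].
      rewrite (IH k' false a (b + uval n1 (S k') f c) (S i) n Af L E) by (auto; simpl in HAf |- *; lia).
      cbn [ss_blocks count_att_refs is_uncle b_official b_parent_official negb andb].
      rewrite nephew_predh. cbn [b_height].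
      replace (i + S (S (S k')))%nat with (S i + S (S k'))%nat by lia.
      rewrite NLgen; try lia;
        [| intros x Hx; specialize (Hh x Hx); simpl in HAf |- *; lia
         | intros bl Hb; rewrite (Hfo bl Hb); simpl in HAf |- *; lia].
      change (hasS (evH c :: firstn n l0)) with (hasS (firstn n l0)).
      change (0 + S i) with (S i). subst f.
      unfold uval, fo_att.
      destruct (Nat.leb_spec (S (S i + S (S k'))) (S i + n1));
      destruct (Nat.leb_spec (S (S (S k'))) n1); try lia;
      destruct (hasS (firstn n l0)); destruct (i =? 0); destruct c; simpl;
      destruct (find b_official L) as [bl|]; try destruct (b_att bl); lia.
Qed.

Lemma split_cycles_S f l : split_cycles (S f) l =
  match cycle_len l with Some k => firstn k l :: split_cycles f (skipn k l) | None => nil end.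
Proof. reflexivity. Qed.

Lemma Us_G n1 s : (2 <= n1) -> Us_prefix n1 s = G n1 St0 s.
Proof.
  intros Hn. unfold Us_prefix.
  destruct s as [|e1 s]; [reflexivity|].
  destruct e1 as [|c1].
  - destruct s as [|e2 s]; [reflexivity|].
    destruct e2 as [|c2].
    +
      change (length (evS :: evS :: s)) with (S (S (length s))).
      rewrite split_cycles_S. cbn [cycle_len].
      destruct (ss_end 2 s) as [m|] eqn:E.
      * cbn [option_map]. change (2 + m) with (S (S m)).
        cbn [firstn skipn].
        set (A := n_official (cycle_blocks 0 (evS :: evS :: firstn m s))).
        assert (HA : A = 2 + cntS (firstn m s)).
        { unfold A. change (cycle_blocks 0 (evS :: evS :: firstn m s))
            with (ss_blocks 0 0 0 (evS :: evS :: firstn m s)).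
          rewrite n_off_ss. reflexivity. }
        set (L := cycles_blocks A (split_cycles (S (length s)) (skipn m s))).
        change (cycle_blocks 0 (evS :: evS :: firstn m s))
            with (ss_blocks 0 0 0 (evS :: evS :: firstn m s)).
        cbn [ss_blocks count_att_refs is_uncle b_official negb andb].
        cbn [G rew nxt].
        rewrite (W1main n1 s 0 true 0 0 0 m A L E); auto.
        all: try lia.
        all: try (intros x Hx; eapply cycs_heights; eauto; fail).
        all: try (intros bl Hb; eapply cycs_first_off; eauto; fail).
        all: try (intros c; apply G_Nx; rewrite length_skipn; lia).
      * cbn [option_map]. cbn [G rew nxt]. rewrite G_W1_none; auto.
    + destruct s as [|e3 s]; [reflexivity|].
      destruct n1 as [|[|n1']]; [lia|lia|].
      destruct e3 as [|[|]]; cbn; rewrite ?G_Done; reflexivity.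
  - cbn. rewrite G_Done. reflexivity.
Qed.

Local Close Scope nat_scope.
Open Scope R_scope.
Open Scope R_scope.

Section Expect.
Variables p q gamma : R.
Hypothesis Hq : 0 < q.
Hypothesis Hqp : q < p.
Hypothesis Hpq : p + q = 1.
Hypothesis Hg : 0 <= gamma <= 1.

Definition SumL (F : list ev -> R) (Ls : list (list ev)) : R :=
  fold_right Rplus 0 (map F Ls).

Definition Ex (g : list ev -> R) (n : nat) : R :=
  SumL (fun s => seq_prob p q gamma s * g s) (all_seqs n).

Lemma SumL_flat F Ls :
  SumL F (flat_map (fun s => [evS :: s; evH true :: s; evH false :: s]) Ls) =
  SumL (fun s => F (evS :: s)) Ls + SumL (fun s => F (evH true :: s)) Ls
  + SumL (fun s => F (evH false :: s)) Ls.
Proof.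
  induction Ls as [|s Ls IH]; unfold SumL in *; simpl; [ring|].
  rewrite IH. ring.
Qed.

Lemma SumL_scale F c Ls : SumL (fun s => c * F s) Ls = c * SumL F Ls.
Proof. induction Ls as [|s Ls IH]; unfold SumL in *; simpl; [ring|]. rewrite IH. ring. Qed.

Lemma SumL_ext F1 F2 Ls : (forall s, F1 s = F2 s) -> SumL F1 Ls = SumL F2 Ls.
Proof. intros H. unfold SumL. f_equal. apply map_ext. auto. Qed.

Lemma Ex_0 g : Ex g 0 = g [].
Proof. unfold Ex, SumL. simpl. ring. Qed.

Lemma Ex_S g n : Ex g (S n) =
  q * Ex (fun s => g (evS :: s)) n + p * gamma * Ex (fun s => g (evH true :: s)) n
  + p * (1 - gamma) * Ex (fun s => g (evH false :: s)) n.
Proof.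
  unfold Ex. cbn [all_seqs]. rewrite SumL_flat.
  unfold seq_prob at 1 2 3. cbn [fold_right ev_weight].
  rewrite <- !SumL_scale. unfold seq_prob. f_equal; [f_equal|]; apply SumL_ext; intros s; ring.
Qed.

Lemma Ex_ext g h n : (forall s, g s = h s) -> Ex g n = Ex h n.
Proof. intros H. unfold Ex. apply SumL_ext. intros; rewrite H; auto. Qed.

Lemma Ex_scale g c n : Ex (fun s => c * g s) n = c * Ex g n.
Proof. unfold Ex. rewrite <- SumL_scale. apply SumL_ext. intros; ring. Qed.

Lemma Ex_plus_const n : forall g c, Ex (fun s => c + g s) n = c + Ex g n.
Proof.
  induction n as [|n IH]; intros g c.
  - rewrite !Ex_0. ring.
  - rewrite !Ex_S. rewrite !IH.
    replace q with (1 - p) by lra. ring.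
Qed.

Lemma w_nonneg : 0 <= q /\ 0 <= p * gamma /\ 0 <= p * (1 - gamma).
Proof. split; [lra|]. split; apply Rmult_le_pos; lra. Qed.

Lemma Ex_mono n : forall g h, (forall s, g s <= h s) -> Ex g n <= Ex h n.
Proof.
  destruct w_nonneg as (W1 & W2 & W3).
  induction n as [|n IH]; intros g h H.
  - rewrite !Ex_0. auto.
  - rewrite !Ex_S.
    repeat apply Rplus_le_compat; apply Rmult_le_compat_l; auto; apply IH; auto.
Qed.

Lemma Ex_abs n : forall g, Rabs (Ex g n) <= Ex (fun s => Rabs (g s)) n.
Proof.
  destruct w_nonneg as (W1 & W2 & W3).
  induction n as [|n IH]; intros g.
  - rewrite !Ex_0. lra.
  - rewrite !Ex_S.
    eapply Rle_trans; [apply Rabs_triang|].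
    eapply Rle_trans; [apply Rplus_le_compat_r; apply Rabs_triang|].
    assert (HA : forall a X, 0 <= a -> Rabs (a * X) = a * Rabs X)
      by (intros; rewrite Rabs_mult, Rabs_pos_eq; auto).
    rewrite !HA by auto.
    repeat apply Rplus_le_compat; apply Rmult_le_compat_l; auto.
Qed.

Lemma Ex_len n : forall (F : nat -> R) g, Ex (fun s => F (length s) * g s) n = F n * Ex g n.
Proof.
  induction n as [|n IH]; intros F g.
  - rewrite !Ex_0. reflexivity.
  - rewrite !Ex_S. cbn [length].
    rewrite (IH (fun m => F (S m)) (fun s => g (evS :: s))).
    rewrite (IH (fun m => F (S m)) (fun s => g (evH true :: s))).
    rewrite (IH (fun m => F (S m)) (fun s => g (evH false :: s))).
    ring.
Qed.

End Expect.

Open Scope R_scope.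

Section Value.
Variables p q gamma : R.
Variable M : nat.
Hypothesis Hq : 0 < q.
Hypothesis Hqp : q < p.
Hypothesis Hpq : p + q = 1.
Hypothesis Hg : 0 <= gamma <= 1.

Let n1 := S (S M).
Definition rr := q / p.
Definition AA := q * (q + p * (q + p * gamma)).
Definition BB := 1 - AA.
Definition rho (j : nat) := 1 - p ^ j * BB.

Definition Dl (k : nat) : R :=
  if Nat.leb k M then
    gamma * ((1 - rr ^ (S (M - k))) / (1 - rr) - BB * p ^ k * (1 - q ^ (S (M - k))) / (1 - q))
  else 0.
Definition dl (k : nat) : R :=
  if Nat.leb k M then
    p * (1 - gamma) * ((1 - q ^ (S (M - k))) / (1 - q)
                       - BB * p ^ k * (1 - (p * q) ^ (S (M - k))) / (1 - p * q))
  else 0.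

Fixpoint phi (k : nat) : R :=
  match k with O => Dl O | S k' => phi k' + Dl (S k') end.

Definition Phi (k : nat) (f : bool) : R :=
  phi (Nat.min k M) + (if f then dl k else 0).

Lemma p_pos : 0 < p. Proof. lra. Qed.
Lemma nz_p : p <> 0. Proof. lra. Qed.
Lemma nz_1r : 1 - rr <> 0.
Proof. unfold rr. intro H. assert (q / p = 1) by lra.
  apply (f_equal (fun x => x * p)) in H0. field_simplify in H0; [lra|]. apply nz_p. Qed.
Lemma nz_1q : 1 - q <> 0. Proof. lra. Qed.
Lemma nz_1pq : 1 - p * q <> 0.
Proof. assert (p * q < 1) by nra. lra. Qed.

Lemma DlM : Dl M = gamma * rho M.
Proof.
  unfold Dl, rho. rewrite Nat.leb_refl, Nat.sub_diag.
  pose proof nz_1r. pose proof nz_1q. simpl. field; auto.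
Qed.

Lemma DlRec k : (k < M)%nat -> p * Dl k = p * gamma * rho k + q * Dl (S k).
Proof.
  intros Hk. unfold Dl, rho.
  destruct (Nat.leb_spec k M); [|lia]. destruct (Nat.leb_spec (S k) M); [|lia].
  replace (M - k)%nat with (S (M - S k)) by lia.
  set (t := (M - S k)%nat).
  pose proof nz_1r. pose proof nz_1q. pose proof nz_p.
  cbn [pow]. unfold rr in *. field; repeat split; auto; lra.
Qed.

Lemma dlRec k : (k <= M)%nat -> dl k = q * dl (S k) + p * (1 - gamma) * rho k.
Proof.
  intros Hk. unfold dl, rho.
  destruct (Nat.leb_spec k M); [|lia].
  destruct (Nat.leb_spec (S k) M).
  - replace (M - k)%nat with (S (M - S k)) by lia.
    set (t := (M - S k)%nat).
    pose proof nz_1pq. pose proof nz_1q. pose proof nz_p.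
    cbn [pow]. field; auto.
  - replace (M - k)%nat with O by lia.
    pose proof nz_1pq. pose proof nz_1q. pose proof nz_p.
    cbn [pow]. field; auto.
Qed.

Lemma dl_big k : (M < k)%nat -> dl k = 0.
Proof. intros H. unfold dl. destruct (Nat.leb_spec k M); [lia|auto]. Qed.


Lemma uval_eq k f c : uval n1 k f c = if (f || c) && Nat.leb k M then 1%nat else 0%nat.
Proof. reflexivity. Qed.

Lemma phi_S k : phi (S k) = phi k + Dl (S k).
Proof. reflexivity. Qed.

Lemma phi_pred k : phi k = match k with O => 0 | S k' => phi k' end + Dl k.
Proof. destruct k; simpl; ring. Qed.

Lemma PhiBell k f : Phi k f =
  q * Phi (S k) f + p * gamma * INR (uval n1 k f true) * rho k
  + p * (1 - gamma) * INR (uval n1 k f false) * rho k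
  + match k with O => 0 | S k' => p * Phi k' false end.
Proof.
  rewrite !uval_eq. unfold Phi.
  destruct (Nat.leb_spec k M) as [HkM|HkM].
  - destruct (Nat.eq_dec k M) as [->|Hne].
    + rewrite Nat.min_id, Nat.min_r by lia. rewrite (dl_big (S M)) by lia.
      rewrite (phi_pred M), DlM, orb_true_r.
      destruct f; cbn [orb andb INR]; rewrite ?(dlRec M) by lia; rewrite ?(dl_big (S M)) by lia;
      destruct M as [|M']; try (rewrite Nat.min_l by lia);
      replace q with (1 - p) by lra; ring.
    + assert (Hk : (k < M)%nat) by lia.
      rewrite !Nat.min_l by lia. rewrite phi_S. rewrite orb_true_r.
      pose proof (DlRec k Hk) as HR.
      destruct k as [|k'].
      * cbn [phi]. destruct f; cbn [orb andb INR]; rewrite ?(dlRec 0) by lia;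
        replace q with (1 - p) in * by lra; lra.
      * rewrite Nat.min_l by lia. rewrite phi_S.
        destruct f; cbn [orb andb INR]; rewrite ?(dlRec (S k')) by lia;
        replace q with (1 - p) in * by lra; lra.
  - rewrite !Nat.min_r by lia. rewrite !andb_false_r. cbn [INR].
    rewrite (dl_big k), (dl_big (S k)) by lia.
    destruct k as [|k']; [lia|]. rewrite Nat.min_r by lia.
    destruct f; replace q with (1 - p) by lra; ring.
Qed.

Definition beta (k : nat) := 1 - p ^ (S k) * BB.

Definition V (x : st) : R :=
  match x with
  | St0 => q * (q * Phi 0 true + p * q)
  | S1 => q * Phi 0 true + p * q
  | SH => q
  | W1 k f a b => INR a + beta k * INR b + Phi k f
  | Nx b => AA * INR b
  | NS b => (q + p * (q + p * gamma)) * INR b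
  | NSH b => (q + p * gamma) * INR b
  | W2 _ b => INR b
  | Done => 0
  end.

Lemma Bellman x : V x =
  q * (INR (rew x evS) + V (nxt n1 x evS))
  + p * gamma * (INR (rew x (evH true)) + V (nxt n1 x (evH true)))
  + p * (1 - gamma) * (INR (rew x (evH false)) + V (nxt n1 x (evH false))).
Proof.
  destruct x as [| | |k f a b|b|b|b|k b|].
  - cbn [rew nxt V INR]. ring.
  - cbn [rew nxt V INR]. unfold V. cbn [INR]. replace q with (1 - p) by lra. ring.
  - cbn [rew nxt V INR]. replace q with (1 - p) by lra. ring.
  - rewrite rew_W1_S, nxt_W1_S. unfold V.
    rewrite (PhiBell k f).
    destruct k as [|k'].
    + cbn [rew nxt]. rewrite !plus_INR. unfold beta, rho, BB. cbn [pow].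
      rewrite ?INR_0. replace q with (1 - p) by lra. ring.
    + cbn [rew nxt]. rewrite !plus_INR. unfold beta, rho. cbn [pow INR].
      replace q with (1 - p) by lra. ring.
  - cbn [rew nxt V INR]. unfold AA. ring.
  - cbn [rew nxt V INR]. ring.
  - cbn [rew nxt V INR]. ring.
  - destruct k; cbn [rew nxt V INR]; replace q with (1 - p) by lra; ring.
  - cbn [rew nxt V INR]. ring.
Qed.

Fixpoint fin (x : st) (s : list ev) : st :=
  match s with nil => x | e :: s' => fin (nxt n1 x e) s' end.

Lemma Dynkin n : forall x,
  Ex p q gamma (fun s => INR (G n1 x s)) n = V x - Ex p q gamma (fun s => V (fin x s)) n.
Proof.
  induction n as [|n IH]; intros x.
  - rewrite !Ex_0. cbn [G fin INR]. ring.
  - rewrite !Ex_S. cbn [G fin].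
    rewrite !(Ex_ext p q gamma (fun s => INR (rew x _ + G n1 (nxt n1 x _) s))
                 (fun s => INR (rew x _) + INR (G n1 (nxt n1 x _) s)))
      by (intros; apply plus_INR).
    rewrite !(Ex_plus_const p q gamma Hpq).
    rewrite !IH. rewrite (Bellman x). ring.
Qed.

Definition zz := / (2 * q).
Definition lam := 3 / 4 + p * q.

Lemma pq_le : p * q <= 1 / 4.
Proof. assert (0 <= (p - q) * (p - q)) by nra. nra. Qed.

Lemma zz_facts : q * zz = 1 / 2 /\ 2 * p <= zz /\ 1 <= zz.
Proof.
  unfold zz. pose proof pq_le.
  assert (q < 1 / 2) by lra.
  split; [field; lra|].
  split.
  - apply (Rmult_le_reg_l (2 * q)); [lra|]. rewrite Rinv_r by lra. nra.
  - apply (Rmult_le_reg_l (2 * q)); [lra|]. rewrite Rinv_r by lra. lra.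
Qed.

Definition Ly (x : st) : R :=
  match x with
  | St0 => 64 | S1 => 32 | SH => 1
  | W1 k _ _ _ => 16 * zz ^ k
  | Nx _ => 4 | NS _ => 2 | NSH _ => 1
  | W2 k _ => zz ^ k
  | Done => 0
  end.

Lemma Ly_nonneg x : 0 <= Ly x.
Proof.
  destruct (zz_facts) as (_ & _ & Hz).
  destruct x; simpl; try lra;
  try (apply Rmult_le_pos; [lra|]); apply pow_le; lra.
Qed.

Lemma walk_step Z : 0 <= Z -> q * (zz * (zz * Z)) + p * Z <= lam * (zz * Z).
Proof.
  intros HZ. destruct zz_facts as (H1 & H2 & H3). unfold lam.
  assert (E : q * (zz * (zz * Z)) = (q * zz) * zz * Z) by ring.
  rewrite E, H1.
  assert (E2 : (3 / 4 + p * q) * (zz * Z) = 3 / 4 * zz * Z + p * (q * zz) * Z) by ring.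
  rewrite E2, H1.
  assert (0 <= (zz - 2 * p) * Z) by (apply Rmult_le_pos; lra).
  nra.
Qed.

Lemma Ly_step x :
  q * Ly (nxt n1 x evS) + p * gamma * Ly (nxt n1 x (evH true))
  + p * (1 - gamma) * Ly (nxt n1 x (evH false)) <= lam * Ly x.
Proof.
  destruct zz_facts as (H1 & H2 & H3). pose proof pq_le.
  assert (Hl : 3 / 4 <= lam) by (unfold lam; nra).
  destruct x as [| | |k f a b|b|b|b|k b|]; cbn [nxt Ly].
  - nra.
  - nra.
  - nra.
  - destruct k as [|k']; cbn [nxt Ly pow].
    + unfold lam. nra.
    + assert (0 <= zz ^ k') by (apply pow_le; lra).
      pose proof (walk_step (zz ^ k') H0).
      replace (q * (16 * (zz * (zz * zz ^ k'))) + p * gamma * (16 * zz ^ k') +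
               p * (1 - gamma) * (16 * zz ^ k'))
        with (16 * (q * (zz * (zz * zz ^ k')) + p * zz ^ k')) by ring.
      nra.
  - nra.
  - nra.
  - nra.
  - destruct k as [|k']; cbn [nxt Ly pow].
    + nra.
    + assert (0 <= zz ^ k') by (apply pow_le; lra).
      pose proof (walk_step (zz ^ k') H0).
      replace (q * (zz * (zz * zz ^ k')) + p * gamma * zz ^ k' + p * (1 - gamma) * zz ^ k')
        with (q * (zz * (zz * zz ^ k')) + p * zz ^ k') by ring.
      lra.
  - nra.
Qed.

Lemma Ex_Ly n : forall x, Ex p q gamma (fun s => Ly (fin x s)) n <= lam ^ n * Ly x.
Proof.
  induction n as [|n IH]; intros x.
  - rewrite Ex_0. simpl. lra.
  - rewrite Ex_S. cbn [fin].
    destruct (w_nonneg p q gamma Hq Hqp Hg) as (W1 & W2 & W3).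
    assert (Hl : 0 <= lam ^ n) by (apply pow_le; unfold lam; pose proof pq_le; nra).
    pose proof (Ly_step x).
    apply Rle_trans with (q * (lam ^ n * Ly (nxt n1 x evS)) + p * gamma * (lam ^ n * Ly (nxt n1 x (evH true)))
       + p * (1 - gamma) * (lam ^ n * Ly (nxt n1 x (evH false)))).
    + repeat apply Rplus_le_compat; apply Rmult_le_compat_l; auto.
    + cbn [pow]. nra.
Qed.

Fixpoint sumabs (F : nat -> R) (n : nat) : R :=
  match n with O => Rabs (F O) | S n' => sumabs F n' + Rabs (F (S n')) end.

Lemma sumabs_ge F n : Rabs (F n) <= sumabs F n.
Proof. destruct n; simpl; [lra|]. pose proof (Rabs_pos (F O)).
  assert (forall m, 0 <= sumabs F m) by (induction m; simpl; [apply Rabs_pos|pose proof (Rabs_pos (F (S m))); lra]).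
  specialize (H0 n). lra. Qed.

Lemma sumabs_mono F j n : (j <= n)%nat -> sumabs F j <= sumabs F n.
Proof.
  intros H. induction H; [lra|]. simpl. pose proof (Rabs_pos (F (S m))). lra.
Qed.

Lemma phi_abs j : Rabs (phi j) <= sumabs Dl j.
Proof.
  induction j; simpl; [lra|]. eapply Rle_trans; [apply Rabs_triang|]. lra.
Qed.

Definition KP := sumabs Dl M + sumabs dl M.

Lemma Phi_abs k f : Rabs (Phi k f) <= KP.
Proof.
  unfold Phi, KP. eapply Rle_trans; [apply Rabs_triang|].
  apply Rplus_le_compat.
  - eapply Rle_trans; [apply phi_abs|]. apply sumabs_mono. lia.
  - destruct f.
    + destruct (Nat.leb_spec k M).
      * eapply Rle_trans; [apply sumabs_ge|]. apply sumabs_mono. auto.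
      * rewrite dl_big by lia. rewrite Rabs_R0.
        pose proof (sumabs_ge dl M). pose proof (Rabs_pos (dl M)). lra.
    + rewrite Rabs_R0. pose proof (sumabs_ge dl M). pose proof (Rabs_pos (dl M)). lra.
Qed.

Lemma pow_01 x n : 0 <= x <= 1 -> 0 <= x ^ n <= 1.
Proof.
  intros H. induction n; simpl; [lra|]. split; [apply Rmult_le_pos; lra|]. nra.
Qed.

Lemma coef_facts : 0 <= q + p * gamma <= 1 /\ 0 <= q + p * (q + p * gamma) <= 1
  /\ 0 <= AA <= 1 /\ 0 <= BB <= 1.
Proof.
  assert (H1 : 0 <= q + p * gamma <= 1) by nra.
  assert (H2 : 0 <= q + p * (q + p * gamma) <= 1) by nra.
  assert (H3 : 0 <= AA <= 1) by (unfold AA; nra).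
  unfold BB. repeat split; lra.
Qed.

Definition Nn (x : st) : nat :=
  match x with
  | W1 _ _ a b => a + b
  | Nx b | NS b | NSH b | W2 _ b => b
  | _ => 0
  end%nat.

Definition KK := 1 + KP + Rabs (V St0) + Rabs (V S1).

Lemma KK_facts : 1 <= KK /\ KP <= KK - 1.
Proof.
  unfold KK. pose proof (Rabs_pos (V St0)). pose proof (Rabs_pos (V S1)).
  assert (0 <= KP) by (pose proof (Phi_abs 0 true); pose proof (Rabs_pos (Phi 0 true)); lra).
  lra.
Qed.

Lemma V_bound x : Rabs (V x) <= KK * (1 + INR (Nn x)) * Ly x.
Proof.
  destruct KK_facts as [K1 K2]. destruct zz_facts as (H1 & H2 & H3).
  destruct coef_facts as (C1 & C2 & C3 & C4).
  pose proof (Rabs_pos (V St0)). pose proof (Rabs_pos (V S1)).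
  assert (HKP : 0 <= KP) by (pose proof (Phi_abs 0 true); pose proof (Rabs_pos (Phi 0 true)); lra).
  assert (HKK : Rabs (V St0) <= KK /\ Rabs (V S1) <= KK) by (unfold KK; lra).
  destruct x as [| | |k f a b|b|b|b|k b|]; cbn [Nn Ly]; rewrite ?INR_0.
  - destruct HKK. lra.
  - destruct HKK. lra.
  - unfold V. rewrite Rabs_pos_eq by lra. lra.
  - unfold V. rewrite plus_INR.
    pose proof (pos_INR a). pose proof (pos_INR b).
    assert (Hz : 1 <= zz ^ k) by (apply pow_R1_Rle; lra).
    assert (Hb : Rabs (beta k) <= 1).
    { unfold beta. pose proof (pow_01 p (S k)). apply Rabs_le. nra. }
    pose proof (Phi_abs k f).
    assert (Rabs (INR a + beta k * INR b + Phi k f) <= INR a + INR b + KP).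
    { eapply Rle_trans; [apply Rabs_triang|]. eapply Rle_trans; [apply Rplus_le_compat_r; apply Rabs_triang|].
      rewrite Rabs_mult, (Rabs_pos_eq (INR a)), (Rabs_pos_eq (INR b)) by lra.
      assert (Rabs (beta k) * INR b <= INR b) by nra. lra. }
    assert (KK * (1 + (INR a + INR b)) <= KK * (1 + (INR a + INR b)) * (16 * zz ^ k)).
    { assert (0 <= KK * (1 + (INR a + INR b))) by nra. nra. }
    nra.
  - unfold V. pose proof (pos_INR b). rewrite Rabs_mult, !Rabs_pos_eq by lra. nra.
  - unfold V. pose proof (pos_INR b). rewrite Rabs_mult, !Rabs_pos_eq by lra. nra.
  - unfold V. pose proof (pos_INR b). rewrite Rabs_mult, !Rabs_pos_eq by lra. nra.
  - unfold V. pose proof (pos_INR b). rewrite Rabs_pos_eq by lra.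
    assert (Hz : 1 <= zz ^ k) by (apply pow_R1_Rle; lra).
    assert (0 <= KK * (1 + INR b)) by nra. nra.
  - unfold V. rewrite Rabs_R0. lra.
Qed.

Lemma Nn_step x e : (Nn (nxt n1 x e) <= S (Nn x))%nat.
Proof.
  assert (Hu : forall k f c, (uval n1 k f c <= 1)%nat)
    by (intros; unfold uval; destruct (_ && _); lia).
  destruct x as [| | |k f a b|b|b|b|k b|]; destruct e as [|c]; try destruct k;
    cbn [nxt Nn]; try lia.
  - pose proof (Hu 0%nat f c); lia.
  - pose proof (Hu (S k) f c); lia.
Qed.

Lemma Nn_fin s : forall x, (Nn (fin x s) <= Nn x + length s)%nat.
Proof.
  induction s as [|e s IH]; intros x; cbn [fin length]; [lia|].
  specialize (IH (nxt n1 x e)). pose proof (Nn_step x e). lia.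
Qed.

Lemma tail_bound n :
  Rabs (Ex p q gamma (fun s => V (fin St0 s)) n) <= KK * (1 + INR n) * (lam ^ n * 64).
Proof.
  destruct KK_facts as [K1 K2].
  eapply Rle_trans; [apply (Ex_abs p q gamma Hq Hqp Hg)|].
  eapply Rle_trans.
  - apply (Ex_mono p q gamma Hq Hqp Hg n _ (fun s => (KK * (1 + INR (length s))) * Ly (fin St0 s))).
    intros s. eapply Rle_trans; [apply V_bound|].
    apply Rmult_le_compat_r; [apply Ly_nonneg|].
    apply Rmult_le_compat_l; [lra|].
    apply Rplus_le_compat_l. apply le_INR. pose proof (Nn_fin s St0). cbn [Nn] in H. lia.
  - rewrite (Ex_len p q gamma n (fun m => KK * (1 + INR m))).
    apply Rmult_le_compat_l; [pose proof (pos_INR n); nra|].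
    apply (Ex_Ly n St0).
Qed.

Lemma lam_facts : 3 / 4 <= lam < 1.
Proof.
  unfold lam. assert (0 < (p - q) * (p - q)) by (apply Rmult_lt_0_compat; lra). nra.
Qed.

Lemma bern h n : 0 <= h -> 1 + INR n * h <= (1 + h) ^ n.
Proof.
  intros Hh. induction n as [|n IH]; [simpl; lra|].
  rewrite S_INR. cbn [pow].
  assert (0 <= INR n * h * h) by (pose proof (pos_INR n); apply Rmult_le_pos; [apply Rmult_le_pos|]; lra).
  nra.
Qed.

Lemma tail_cv : forall eps, 0 < eps -> exists N0, forall n, (n >= N0)%nat ->
  KK * (1 + INR n) * (lam ^ n * 64) < eps.
Proof.
  intros eps He. destruct lam_facts as [L1 L2]. destruct KK_facts as [K1 K2].
  set (h := (1 - lam) / (2 * lam)).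
  assert (Hh : 0 < h <= 1) by (unfold h; split;
    [apply Rdiv_lt_0_compat; lra | apply Rmult_le_reg_r with (2 * lam); [lra|];
      unfold Rdiv; rewrite Rmult_assoc, Rinv_l, Rmult_1_r; lra]).
  set (mu := (1 + h) * lam).
  assert (Hmu : 0 <= mu < 1).
  { unfold mu, h. split; [apply Rmult_le_pos; [apply Rplus_le_le_0_compat; [lra|]; apply Rlt_le; apply Rdiv_lt_0_compat; lra|lra]|].
    replace ((1 + (1 - lam) / (2 * lam)) * lam) with ((1 + lam) / 2) by (field; lra). lra. }
  destruct (pow_lt_1_zero mu ltac:(rewrite Rabs_pos_eq; lra) (eps * h / (64 * KK)))
    as [N0 HN0].
  { apply Rdiv_lt_0_compat; [apply Rmult_lt_0_compat|]; lra. }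
  exists N0. intros n Hn. specialize (HN0 n Hn). rewrite Rabs_pos_eq in HN0 by (apply pow_le; lra).
  assert (B1 : (1 + INR n) * h <= (1 + h) ^ n).
  { pose proof (bern h n ltac:(lra)). pose proof (pos_INR n). nra. }
  assert (B2 : (1 + INR n) * h * lam ^ n <= mu ^ n).
  { unfold mu. rewrite Rpow_mult_distr. apply Rmult_le_compat_r; [apply pow_le; lra|auto]. }
  assert (B3 : mu ^ n * (64 * KK) < eps * h).
  { apply Rmult_lt_reg_r with (/ (64 * KK)).
    - apply Rinv_0_lt_compat. lra.
    - rewrite Rmult_assoc, Rinv_r, Rmult_1_r by lra. exact HN0. }
  assert (Hlp : 0 <= lam ^ n) by (apply pow_le; lra).
  apply Rmult_lt_reg_r with h; [lra|].
  nra.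
Qed.

Lemma conv_V : Un_cv (fun N => Ex p q gamma (fun s => INR (G n1 St0 s)) N) (V St0).
Proof.
  intros eps He. destruct (tail_cv eps He) as [N0 HN0]. exists N0. intros n Hn.
  unfold Rdist. rewrite Dynkin.
  replace (V St0 - Ex p q gamma (fun s => V (fin St0 s)) n - V St0)
    with (- Ex p q gamma (fun s => V (fin St0 s)) n) by ring.
  rewrite Rabs_Ropp. eapply Rle_lt_trans; [apply tail_bound|]. auto.
Qed.

Lemma V_St0_formula :
  V St0 =
    q + q ^ 3 * gamma / (p - q)
     - p * q ^ 2 / (p - q) * (q / p) ^ (S (S M) - 1) * gamma
     - q ^ (S (S M) + 1) * (1 - gamma)
     - (p ^ 2 * q
        + (p + (1 - gamma) * p ^ 2 * q)
          * (q ^ 2 / p * (1 - q ^ (S (S M) - 1)) * gamma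
             + (1 - gamma) * p * q ^ 2 * (1 - (p * q) ^ (S (S M) - 1)) / (1 - p * q))).
Proof.
  unfold V, Phi. cbn [Nat.min phi]. unfold Dl, dl.
  replace (Nat.leb 0 M) with true by reflexivity. rewrite Nat.sub_0_r.
  replace (S (S M) - 1)%nat with (S M) by lia.
  replace (S (S M) + 1)%nat with (S (S (S M))) by lia.
  unfold rr, BB, AA. cbn [pow].
  set (W := q ^ M). set (Yb := (q / p) ^ M). set (Zb := (p * q) ^ M).
  pose proof nz_1pq. pose proof nz_p.
  assert (p - q <> 0) by lra.
  assert (1 - q / p <> 0) by (apply nz_1r).
  replace q with (1 - p) in * by lra.
  field. repeat split; auto; lra.
Qed.

End Value.

Theorem corollary2 (p q gamma : R) (n1 : nat) :
  0 < q -> q < p -> p + q = 1 -> 0 <= gamma <= 1 -> (2 <= n1)%nat ->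
  Un_cv (fun N => ExpUs_N p q gamma n1 N)
    (q + q ^ 3 * gamma / (p - q)
     - p * q ^ 2 / (p - q) * (q / p) ^ (n1 - 1) * gamma
     - q ^ (n1 + 1) * (1 - gamma)
     - (p ^ 2 * q
        + (p + (1 - gamma) * p ^ 2 * q)
          * (q ^ 2 / p * (1 - q ^ (n1 - 1)) * gamma
             + (1 - gamma) * p * q ^ 2 * (1 - (p * q) ^ (n1 - 1)) / (1 - p * q)))).
Proof.
  intros Hq Hqp Hpq Hg Hn.
  destruct n1 as [|[|M]]; [lia|lia|].
  pose proof (conv_V p q gamma M Hq Hqp Hpq Hg) as Hc.
  rewrite (V_St0_formula p q gamma M Hq Hqp Hpq) in Hc.
  intros eps He. destruct (Hc eps He) as [N HN]. exists N. intros n Hn'.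
  specialize (HN n Hn').
  replace (ExpUs_N p q gamma (S (S M)) n)
    with (Ex p q gamma (fun s => INR (G (S (S M)) St0 s)) n); [exact HN|].
  unfold ExpUs_N.
  change (fold_right Rplus 0
      (map (fun s => seq_prob p q gamma s * INR (Us_prefix (S (S M)) s)) (all_seqs n)))
    with (Ex p q gamma (fun s => INR (Us_prefix (S (S M)) s)) n).
  apply Ex_ext. intros s. rewrite Us_G; auto.
Qed.
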